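(* Let $(A,\triangleright,\triangleleft,\alpha)$ be a Hom-$L$-dendriform algebra. Define $x\triangleright^t y:=x\triangleright y$ and $x\triangleleft^t y:=-y\triangleleft x$. Then $(A,\triangleright^t,\triangleleft^t,\alpha)$ is a Hom-$L$-dendriform algebra. Moreover, writing $x\cdot y=x\triangleright y+x\triangleleft y$, $x\ast y=x\triangleright y-y\triangleleft x$ and $\cdot^t,\ast^t$ for the analogous operations built from $\triangleright^t,\triangleleft^t$, one has $\cdot^t=\ast$ and $\ast^t=\cdot$.
   Context: A Hom-$L$-dendriform algebra is a vector space $A$ with bilinear maps $\triangleleft,\triangleright:A\otimes A\to A$ and a linear map $\alpha:A\to A$ such that for all $x,y,z\in A$: $\alpha(x)\triangleright(y\triangleright z)=(x\triangleright y)\triangleright\alpha(z)+(x\triangleleft y)\triangleright\alpha(z)+\alpha(y)\triangleright(x\triangleright z)-(y\triangleleft x)\triangleright\alpha(z)-(y\triangleright x)\triangleright\alpha(z)$ and $\alpha(x)\triangleright(y\triangleleft z)=(x\triangleright y)\triangleleft\alpha(z)+\alpha(y)\triangleleft(x\triangleright z)+\alpha(y)\triangleleft(x\triangleleft z)-(y\triangleleft x)\triangleleft\alpha(z)$. *)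

(* Defs.v *)
From mathcomp Require Import all_boot all_algebra.
Set Implicit Arguments. Unset Strict Implicit. Unset Printing Implicit Defensive.
Import GRing.Theory.
Local Open Scope ring_scope.

Definition bilinear_map (K : fieldType) (V : lmodType K) (m : V -> V -> V) : Prop :=
  (forall y, linear (fun x => m x y)) /\ (forall x, linear (m x)).

Definition is_HomLDendriform (K : fieldType) (V : lmodType K)
  (gt lt : V -> V -> V) (alpha : V -> V) : Prop :=
  [/\ bilinear_map gt, bilinear_map lt, linear alpha,
   (forall x y z,
      gt (alpha x) (gt y z) =
        gt (gt x y) (alpha z) + gt (lt x y) (alpha z) + gt (alpha y) (gt x z)
        - gt (lt y x) (alpha z) - gt (gt y x) (alpha z)) &
   (forall x y z,
      gt (alpha x) (lt y z) =
        lt (gt x y) (alpha z) + lt (alpha y) (gt x z) + lt (alpha y) (lt x z)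
        - lt (lt y x) (alpha z))].

Definition gt_t (K : fieldType) (V : lmodType K) (gt : V -> V -> V) : V -> V -> V :=
  fun x y => gt x y.
Definition lt_t (K : fieldType) (V : lmodType K) (lt : V -> V -> V) : V -> V -> V :=
  fun x y => - lt y x.

Definition dot_op (K : fieldType) (V : lmodType K) (gt lt : V -> V -> V) : V -> V -> V :=
  fun x y => gt x y + lt x y.
Definition ast_op (K : fieldType) (V : lmodType K) (gt lt : V -> V -> V) : V -> V -> V :=
  fun x y => gt x y - lt y x.

(* Main.v *)
Require Import Defs.
From mathcomp Require Import all_boot all_algebra.
From Stdlib Require Import FunctionalExtensionality.
Import GRing.Theory.
Local Open Scope ring_scope.

Theorem mainTheorem13 (K : fieldType) (V : lmodType K)
  (gt lt : V -> V -> V) (alpha : V -> V) :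
  is_HomLDendriform gt lt alpha ->
  is_HomLDendriform (gt_t gt) (lt_t lt) alpha /\
  dot_op (gt_t gt) (lt_t lt) = ast_op gt lt /\
  ast_op (gt_t gt) (lt_t lt) = dot_op gt lt.
Proof.
case=> [[gl gr] [ll lr] la H1 H2].
have z0 : forall f : V -> V, (forall a u v, f (a *: u + v) = a *: f u + f v) ->
    forall u, f (- u) = - f u.
  move=> f hf u.
  have f0 : f 0 = 0.
    have := hf 1 0 0; rewrite scale1r addr0.
    rewrite -{1}(addr0 (f 0)) => h.
    rewrite scale1r in h; exact: esym (addrI _ h).
  by have := hf (-1) u 0; rewrite addr0 f0 addr0 !scaleN1r.
have gN : forall a c, gt (- a) c = - gt a c.
  by move=> a c; apply: (z0 (fun x => gt x c)) => *; apply: gl.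
have lNl : forall a c, lt (- a) c = - lt a c.
  by move=> a c; apply: (z0 (fun x => lt x c)) => *; apply: ll.
have lNr : forall a c, lt c (- a) = - lt c a.
  by move=> a c; apply: (z0 (lt c)) => *; apply: lr.
have gNr : forall a c, gt c (- a) = - gt c a.
  by move=> a c; apply: (z0 (gt c)) => *; apply: gr.
split; last first.
  split; apply: functional_extensionality => x; apply: functional_extensionality => y; rewrite /dot_op /ast_op /gt_t /lt_t //.
  by rewrite opprK.
split => //.
- split=> [y|x] a u v /=; rewrite /lt_t.
  + by rewrite lr scalerN opprD.
  + by rewrite ll scalerN opprD.
- move=> x y z; rewrite /gt_t /lt_t !gN H1.
  rewrite !opprK; congr (_ - _).
  by rewrite [LHS]addrAC [RHS]addrAC [X in _ = X + _]addrAC.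
- move=> x y z; rewrite /gt_t /lt_t.
  rewrite (lNl (lt z x)) (lNr (lt x y)) !opprK.
  rewrite gNr H2 !opprD !opprK [LHS]addrAC.
  by rewrite [- lt (gt x z) _ + _]addrC.
Qed.
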